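(* Let $r\in(0,1]$, let $x^*$ be a stationary state of the recombinator dynamics with rate $r$, let $d\in D$ and $a_d\in A_d\setminus\operatorname{supp}_d(x^* )$. Write $\hat u(a)=u_{x^*}(a)/u_{x^*}$ and, for $y\in\Delta(\operatorname{supp}_{-d}(x^* ))$, $\hat u(a_d|y)=\sum_{a'_{-d}\in\operatorname{supp}_{-d}(x^* )}\hat u(a_d,a'_{-d})y(a'_{-d})$. Consider the partner dynamics on $\Delta(\operatorname{supp}_{-d}(x^* ))$: $$\dot y(a_{-d})=(1-r)\hat u(a_d,a_{-d})y(a_{-d})+r\,\hat u(a_d|y)\prod_{d'\neq d}x^*(a_{d'})-y(a_{-d})\,\hat u(a_d|y),\qquad a_{-d}\in\operatorname{supp}_{-d}(x^* ).$$ Then its stationary points are exactly the solutions $\eta$ of the stable-partner equation (below), and from every initial condition $y^0\in\Delta(\operatorname{supp}_{-d}(x^* ))$ the trajectory satisfies $y^t\to\eta^{a_d}_{x^*}$ as $t\to\infty$; that is, the stable partner distribution $\eta^{a_d}_{x^*}$ is the unique globally stable equilibrium of the partner dynamics.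
   Context: Setting: $D=\{1,\dots,|D|\}$ finite, $|D|\ge2$; finite trait sets $A_d$; types $A=\prod_dA_d$, $a=(a_d,a_{-d})$, $a_{-d}=(a_{d'})_{d'\neq d}\in\prod_{d'\ne d}A_{d'}$. Payoff $u:A\times A\to\mathbb{R}_{>0}$; for $x\in\Delta(A)$: $u_x(a)=\sum_{a'}x(a')u(a,a')$, $u_x=\sum_ax(a)u_x(a)$, $x(a_d)=\sum_{a_{-d}}x(a_d,a_{-d})$, $x(a_{-d})=\sum_{a_d}x(a_d,a_{-d})$, $\operatorname{supp}_d(x)=\{a_d:x(a_d)>0\}$, $\operatorname{supp}_{-d}(x)=\{a_{-d}:x(a_{-d})>0\}$, trait payoff $u_x(a_d)=\frac1{x(a_d)}\sum_{a_{-d}}x(a_d,a_{-d})u_x(a_d,a_{-d})$ (with $x(a_d)u_x(a_d):=\sum_{a_{-d}}x(a_d,a_{-d})u_x(a_d,a_{-d})$). Recombinator dynamics with rate $r$: $\dot x(a)=(1-r)\frac{x(a)u_x(a)}{u_x}+r\prod_{a_d\in a}\frac{x(a_d)u_x(a_d)}{u_x}-x(a)$; stationary means $\dot x=0$. The stable partner distribution $\eta^{a_d}_{x^*}\in\Delta(\operatorname{supp}_{-d}(x^* ))$ is the unique solution of $\eta(a_{-d})=(1-r)\frac{\eta(a_{-d})u_{x^*}(a_d,a_{-d})}{\sum_{a'_{-d}\in\operatorname{supp}_{-d}(x^* )}\eta(a'_{-d})u_{x^*}(a_d,a'_{-d})}+r\prod_{d'\ne d}x^*(a_{d'})$ for all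 $a_{-d}\in\operatorname{supp}_{-d}(x^* )$. *)

(* Defs.v *)
From HB Require Import structures.
From mathcomp Require Import all_boot all_order all_algebra.
From mathcomp Require Import all_classical all_reals all_analysis.
Set Implicit Arguments. Unset Strict Implicit. Unset Printing Implicit Defensive.
Import Order.TTheory GRing.Theory Num.Theory.
Import numFieldNormedType.Exports.
Local Open Scope classical_set_scope.
Local Open Scope ring_scope.

Section Recomb.
Variables (n : nat) (A : 'I_n -> finType) (R : realType).

Definition Prof := {dffun forall d : 'I_n, A d}.
(* partial profiles a_{-d} = (a_{d'})_{d' <> d} *)
Definition Other (d : 'I_n) := {d' : 'I_n | d' != d}.
Definition Rest (d : 'I_n) := {dffun forall d' : Other d, A (val d')}.

Definition restr (d : 'I_n) (a : Prof) : Rest d :=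
  [ffun d' : Other d => a (val d')].

Definition neq_of (d d' : 'I_n) (ne : d <> d') : d' != d :=
  introN eqP (fun h : d' = d => ne (esym h)).

(* the type (a_d, a_{-d}) *)
Definition join (d : 'I_n) (ad : A d) (am : Rest d) : Prof :=
  @finfun _ (fun d' => A d')
    (fun d' => match d =P d' with
               | ReflectT e => eq_rect d A ad d' e
               | ReflectF ne => am (exist _ d' (neq_of ne))
               end).

Variable u : Prof -> Prof -> R.

Definition simplex (x : Prof -> R) := (forall a, 0 <= x a) /\ \sum_a x a = 1.

Definition ux (x : Prof -> R) (a : Prof) : R := \sum_a' x a' * u a a'.
Definition ubar (x : Prof -> R) : R := \sum_a x a * ux x a.
Definition marg (x : Prof -> R) (d : 'I_n) (ad : A d) : R :=
  \sum_(a : Prof | a d == ad) x a.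
Definition margm (x : Prof -> R) (d : 'I_n) (am : Rest d) : R :=
  \sum_(a : Prof | restr d a == am) x a.
(* x(a_d) u_x(a_d) *)
Definition margu (x : Prof -> R) (d : 'I_n) (ad : A d) : R :=
  \sum_(a : Prof | a d == ad) x a * ux x a.

Definition recomb_field (r : R) (x : Prof -> R) (a : Prof) : R :=
  (1 - r) * (x a * ux x a / ubar x)
  + r * \prod_(d : 'I_n) (margu x (a d) / ubar x) - x a.

Definition recomb_stationary (r : R) (x : Prof -> R) :=
  forall a, recomb_field r x a = 0.

Definition suppm (x : Prof -> R) (d : 'I_n) (am : Rest d) : bool :=
  0 < margm x am.

(* y in Delta(supp_{-d}(x)) : only coordinates in supp_{-d}(x) matter *)
Definition psimplex (x : Prof -> R) (d : 'I_n) (y : Rest d -> R) :=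
  (forall am, suppm x am -> 0 <= y am) /\
  \sum_(am | suppm x am) y am = 1.

Definition prodmarg (x : Prof -> R) (d : 'I_n) (am : Rest d) : R :=
  \prod_(d' : Other d) marg x (am d').

Definition stable_partner (r : R) (x : Prof -> R) (d : 'I_n) (ad : A d)
    (eta : Rest d -> R) :=
  psimplex x eta /\
  forall am, suppm x am ->
    eta am = (1 - r) * (eta am * ux x (join ad am) /
               \sum_(am' | suppm x am') eta am' * ux x (join ad am'))
             + r * prodmarg x am.

Definition uhat (x : Prof -> R) (a : Prof) : R := ux x a / ubar x.
Definition uhat_cond (x : Prof -> R) (d : 'I_n) (ad : A d) (y : Rest d -> R) : R :=
  \sum_(am' | suppm x am') uhat x (join ad am') * y am'.

Definition partner_field (r : R) (x : Prof -> R) (d : 'I_n) (ad : A d)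
    (y : Rest d -> R) (am : Rest d) : R :=
  (1 - r) * uhat x (join ad am) * y am
  + r * uhat_cond x ad y * prodmarg x am
  - y am * uhat_cond x ad y.

Definition partner_stationary (r : R) (x : Prof -> R) (d : 'I_n) (ad : A d)
    (y : Rest d -> R) :=
  forall am, suppm x am -> partner_field r x ad y am = 0.

Definition partner_solution (r : R) (x : Prof -> R) (d : 'I_n) (ad : A d)
    (y : R -> Rest d -> R) :=
  forall am, suppm x am ->
    (y s am @[s --> 0^'+] --> y 0 am) /\
    (forall t : R, 0 < t -> is_derive t 1 (fun s => y s am)
                               (partner_field r x ad (y t) am)).

End Recomb.

(* Main.v *)
Require Import Defs.
From HB Require Import structures.
From mathcomp Require Import all_boot all_order all_algebra.
From mathcomp Require Import all_classical all_reals all_analysis.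
From mathcomp Require Import ring lra.
Set Implicit Arguments. Unset Strict Implicit. Unset Printing Implicit Defensive.
Import Order.TTheory GRing.Theory Num.Theory.
Import numFieldNormedType.Exports.
Local Open Scope classical_set_scope.
Local Open Scope ring_scope.

Section Ana.
Variable R : realType.

Lemma is_derive_bigsum (I : Type) (s : seq I) (P : pred I) (f : I -> R -> R)
  (df : I -> R) (t : R) :
  (forall i, P i -> is_derive t 1 (f i) (df i)) ->
  is_derive t 1 (fun x => \sum_(i <- s | P i) f i x) (\sum_(i <- s | P i) df i).
Proof.
move=> H; elim: s => [|j s IH].
  rewrite big_nil; have -> : (fun x => \sum_(i <- [::] | P i) f i x) = cst 0.
    by apply: funext => x; rewrite big_nil.
  exact: is_derive_cst.
rewrite big_cons; case Pj: (P j).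
  have -> : (fun x => \sum_(i <- j :: s | P i) f i x) =
     f j + (fun x => \sum_(i <- s | P i) f i x).
    by apply: funext => x; rewrite big_cons Pj.
  exact: (is_deriveD (H j Pj) IH).
have -> : (fun x => \sum_(i <- j :: s | P i) f i x) =
     (fun x => \sum_(i <- s | P i) f i x).
  by apply: funext => x; rewrite big_cons Pj.
exact: IH.
Qed.

Lemma cvg_bigsum (T : Type) (F : set_system T) {FF : Filter F} (I : Type)
  (s : seq I) (P : pred I) (f : I -> T -> R) (a : I -> R) :
  (forall i, P i -> f i x @[x --> F] --> a i) ->
  (\sum_(i <- s | P i) f i x) @[x --> F] --> \sum_(i <- s | P i) a i.
Proof.
move=> H; elim: s => [|j s IH].
  rewrite big_nil; have -> : (fun x => \sum_(i <- [::] | P i) f i x) = cst 0.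
    by apply: funext => x; rewrite big_nil.
  exact: cvg_cst.
rewrite big_cons; case Pj: (P j).
  have -> : (fun x => \sum_(i <- j :: s | P i) f i x) =
     f j + (fun x => \sum_(i <- s | P i) f i x).
    by apply: funext => x; rewrite big_cons Pj.
  exact: (cvgD (H j Pj) IH).
have -> : (fun x => \sum_(i <- j :: s | P i) f i x) =
     (fun x => \sum_(i <- s | P i) f i x).
  by apply: funext => x; rewrite big_cons Pj.
exact: IH.
Qed.

Lemma deriv_cont (f : R -> R) t : derivable f t 1 -> f x @[x --> t] --> f t.
Proof. by move=> H; apply/differentiable_continuous/derivable1_diffP. Qed.

Lemma within_cont0 (f : R -> R) (T : R) : 0 < T ->
  f x @[x --> 0^'+] --> f 0 -> (forall t, 0 < t -> derivable f t 1) ->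
  {within `[0, T], continuous f}.
Proof.
move=> T0 H0 Hd; apply/continuous_within_itvP => //; split => //.
  move=> t; rewrite in_itv /= => /andP[t0 _]; exact: deriv_cont (Hd _ t0).
by apply: cvg_at_left_filter; exact: deriv_cont (Hd _ T0).
Qed.

Lemma within_bounded (f : R -> R) (T : R) : 0 <= T ->
  {within `[0, T], continuous f} ->
  exists M, forall t, 0 <= t <= T -> `|f t| <= M.
Proof.
move=> T0 Hc; have [c1 _ Hmax] := EVT_max T0 Hc.
have [c2 _ Hmin] := EVT_min T0 Hc.
exists (`|f c1| + `|f c2|) => t Ht.
have tin : t \in `[0, T] by rewrite in_itv /= Ht.
have h1 := Hmax t tin; have h2 := Hmin t tin.
have a1 := ler_norm (f c1); have a2 := ler_norm (- f c2); rewrite normrN in a2.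
have a3 := normr_ge0 (f c1); have a4 := normr_ge0 (f c2).
rewrite ler_norml; apply/andP; split; lra.
Qed.

End Ana.

Section Ana2. Variable R : realType.
Lemma lin_der (k t : R) : is_derive t 1 (fun s : R => k * s) k.
Proof.
have := is_deriveZ k (@is_derive_id _ _ t 1).
by rewrite /GRing.scale /= mulr1.
Qed.
Lemma expk_derive (k t : R) : is_derive t 1 (fun s => expR (k * s)) (expR (k * t) * k).
Proof.
have := @is_derive1_comp R expR (fun s => k * s) t _ _ (is_derive_expR (k * t)) (lin_der k t).
by [].
Qed.

Lemma gron_aux (f c : R -> R) (T k : R) : 0 < T ->
  f x @[x --> 0^'+] --> f 0 ->
  (forall t : R, 0 < t -> is_derive t 1 f (c t * f t)) ->
  exists2 xi : R, 0 < xi < T &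
   f T ^+ 2 * expR (k * T) - f 0 ^+ 2 = f xi ^+ 2 * expR (k * xi) * (k + 2 * c xi) * T.
Proof.
move=> T0 Hf Hd.
pose g := fun t => f t ^+ 2 * expR (k * t).
pose dg := fun t => f t ^+ 2 * expR (k * t) * (k + 2 * c t).
have gE : g = (f * f) * (fun s => expR (k * s)).
  by apply: funext => s; rewrite /g /= expr2.
have Hdg : forall t : R, 0 < t -> is_derive t 1 g (dg t).
  move=> t t0; rewrite gE.
  have := is_deriveM (is_deriveM (Hd t t0) (Hd t t0)) (expk_derive k t).
  move=> H; eapply is_derive_eq; first exact: H.

  rewrite /dg /GRing.scale /= (_ : (f * f) t = f t * f t) //; ring.
have gc : {within `[0, T], continuous g}.
  apply: within_cont0 => //; last by move=> t t0; case: (Hdg t t0).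
  rewrite gE; apply: cvgM; first exact: cvgM.
  apply: cvg_at_right_filter; apply: deriv_cont.
  by case: (expk_derive k 0).
have xi0 : forall x : R, x \in `]0, T[ -> 0 < x by move=> x; rewrite in_itv /= => /andP[].
have Hdg' : forall x : R, x \in `]0, T[ -> is_derive x 1 g (dg x).
  by move=> x /xi0; exact: Hdg.
have [xi xin E] := MVT T0 Hdg' gc.
exists xi; first by move: xin; rewrite in_itv.
by move: E; rewrite /g /dg mulr0 expR0 mulr1 subr0.
Qed.

Lemma gronwall (f c : R -> R) (T M : R) : 0 < T ->
  f x @[x --> 0^'+] --> f 0 ->
  (forall t : R, 0 < t -> is_derive t 1 f (c t * f t)) ->
  (forall t : R, 0 < t < T -> `|c t| <= M) ->
  (f 0 = 0 -> f T = 0) /\ (f 0 != 0 -> f T != 0).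
Proof.
move=> T0 Hf Hd Hc; split.
  move=> f00; have [xi /andP[xi0 xiT] E] := gron_aux (- (2 * M)) T0 Hf Hd.
  have := Hc xi; rewrite xi0 xiT => /(_ isT); rewrite ler_norml => /andP[h1 h2].
  have A0 : 0 <= f xi ^+ 2 * expR (- (2 * M) * xi).
    by rewrite mulr_ge0 ?sqr_ge0 ?expR_ge0.
  have B0 : - (2 * M) + 2 * c xi <= 0 by lra.
  have AB : f xi ^+ 2 * expR (- (2 * M) * xi) * (- (2 * M) + 2 * c xi) <= 0 by nra.
  have ABT : f xi ^+ 2 * expR (- (2 * M) * xi) * (- (2 * M) + 2 * c xi) * T <= 0 by nra.
  move: E; rewrite f00 expr0n /= subr0 => E.
  have e0 := expR_gt0 (- (2 * M) * T).
  have G0 : f T ^+ 2 * expR (- (2 * M) * T) <= 0 by rewrite E.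
  have : f T ^+ 2 <= 0 by nra.
  have := sqr_ge0 (f T) => h3 h4.
  by apply/eqP; rewrite -sqrf_eq0 eq_le h4 h3.
move=> f0; have [xi /andP[xi0 xiT] E] := gron_aux (2 * M) T0 Hf Hd.
have := Hc xi; rewrite xi0 xiT => /(_ isT); rewrite ler_norml => /andP[h1 h2].
have A0 : 0 <= f xi ^+ 2 * expR ((2 * M) * xi).
  by rewrite mulr_ge0 ?sqr_ge0 ?expR_ge0.
have B0 : 0 <= 2 * M + 2 * c xi by lra.
have AB : 0 <= f xi ^+ 2 * expR ((2 * M) * xi) * (2 * M + 2 * c xi) by nra.
have ABT : 0 <= f xi ^+ 2 * expR ((2 * M) * xi) * (2 * M + 2 * c xi) * T by nra.
have F0 : 0 < f 0 ^+ 2 by rewrite exprn_even_gt0 //=.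
apply/negP => /eqP fT; move: E; rewrite fT expr0n /= mul0r => E; lra.
Qed.

Lemma nonincr (H dH : R -> R) :
  (forall t : R, 0 < t -> is_derive t 1 H (dH t)) ->
  (forall t : R, 0 < t -> dH t <= 0) ->
  forall s t : R, 0 < s -> s <= t -> H t <= H s.
Proof.
move=> Hd Hn s t s0 st.
have pos : forall x : R, x \in `[s, t] -> 0 < x.
  by move=> x; rewrite in_itv /= => /andP[sx _]; exact: lt_le_trans sx.
have Hd' : forall x : R, x \in `]s, t[ -> is_derive x 1 H (dH x).
  by move=> x; rewrite in_itv /= => /andP[sx _]; apply: Hd; exact: lt_trans sx.
have Hc : {within `[s, t], continuous H}.
  by apply: derivable_within_continuous => x /pos x0; case: (Hd x x0).
have [c cin E] := MVT_segment st Hd' Hc.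
have := Hn c (pos c cin); have : 0 <= t - s by lra.
move=> h1 h2; have : dH c * (t - s) <= 0 by nra.
lra.
Qed.

Lemma decay (H dH : R -> R) (kap : R) : 0 < kap ->
  (forall t : R, 0 < t -> is_derive t 1 H (dH t)) ->
  (forall t : R, 0 < t -> dH t <= - (kap * H t)) ->
  (forall t : R, 0 < t -> 0 <= H t) ->
  H t @[t --> +oo] --> 0.
Proof.
move=> k0 Hd Hn Hp.
have Hn0 : forall t : R, 0 < t -> dH t <= 0.
  by move=> t t0; have := Hn t t0; have := Hp t t0; nra.
have NI := nonincr Hd Hn0.
apply/cvgrPdist_lt => e e0.
have H1 := Hp 1 ltr01.
pose T := 1 + H 1 / (kap * e).
have ke : 0 < kap * e by rewrite mulr_gt0.
have T1 : 1 <= T by rewrite /T lerDl divr_ge0 // ltW.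
have T0 : 0 < T by lra.
have HT : H T < e.
  rewrite ltNge; apply/negP => HTe.
  have Hd' : forall x : R, x \in `]1, T[ -> is_derive x 1 H (dH x).
    by move=> x; rewrite in_itv /= => /andP[sx _]; apply: Hd; lra.
  have pos : forall x : R, x \in `[1, T] -> 0 < x.
    by move=> x; rewrite in_itv /= => /andP[sx _]; lra.
  have Hc : {within `[1, T], continuous H}.
    by apply: derivable_within_continuous => x /pos x0; case: (Hd x x0).
  have [c cin E] := MVT_segment T1 Hd' Hc.
  have c0 := pos c cin.
  have cT : c <= T by move: cin; rewrite in_itv /= => /andP[].
  have Hc' := NI c T c0 cT.
  have := Hn c c0 => h1.
  have h2 : dH c <= - (kap * e) by nra.
  have TT : T - 1 = H 1 / (kap * e) by rewrite /T; ring.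
  have h3 : dH c * (T - 1) <= - (kap * e) * (T - 1) by rewrite ler_wpM2r // TT divr_ge0 // ltW.
  have : - (kap * e) * (T - 1) = - H 1.
    by rewrite TT mulNr mulrCA mulrV ?mulr1 // unitfE gt_eqF.
  lra.
exists T; split; first by rewrite num_real.
move=> t Tt; rewrite sub0r normrN ger0_norm; last by apply: Hp; lra.
by apply: le_lt_trans HT; apply: NI => //; lra.
Qed.

Lemma sq_conv (g h : R -> R) (a : R) :
  h t @[t --> +oo] --> 0 ->
  (forall t : R, 0 < t -> (g t - a) ^+ 2 <= h t) ->
  g t @[t --> +oo] --> a.
Proof.
move=> Hh Hb; apply/cvgrPdist_lt => e e0.
move/cvgrPdist_lt: Hh => /(_ (e ^+ 2) (exprn_gt0 _ e0)) Hh.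
near=> t.
have t0 : 0 < t by near: t; apply: nbhs_pinfty_gt; rewrite num_real.
have := Hb t t0; have : `|0 - h t| < e ^+ 2 by near: t; exact: Hh.
rewrite sub0r normrN => h1 h2.
have h3 := ler_norm (h t).
rewrite ltr_norml; apply/andP; split; nra.
Unshelve. all: by end_near.
Qed.
End Ana2.


Section Alg.
Variables (R : realType) (I : finType) (P : pred I).

Lemma sym_id (s q : I -> R) (k : R) :
  \sum_(i | P i) s i * (q i - k) * (\sum_(j | P j) s j * (q j - q i)) * 2 =
  - \sum_(i | P i) \sum_(j | P j) s i * s j * (q i - q j) ^+ 2.
Proof.
pose a i j := s i * s j * (q i - k) * (q j - q i).
have -> : \sum_(i | P i) s i * (q i - k) * (\sum_(j | P j) s j * (q j - q i)) * 2 =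
   \sum_(i | P i) \sum_(j | P j) a i j + \sum_(i | P i) \sum_(j | P j) a i j.
  rewrite -big_split /=; apply: eq_bigr => i _.
  rewrite -big_split /= mulr_sumr mulr_suml; apply: eq_bigr => j _.
  rewrite /a; ring.
rewrite [X in _ + X]exchange_big /= -big_split /= -sumrN; apply: eq_bigr => i _.
rewrite -big_split /= -sumrN; apply: eq_bigr => j _; rewrite /a; ring.
Qed.

Lemma var_id (w z : I -> R) (c0 : R) :
  \sum_(i | P i) w i = c0 -> \sum_(i | P i) w i * z i = 0 ->
  \sum_(i | P i) \sum_(j | P j) w i * w j * (z i - z j) ^+ 2 =
  2 * c0 * \sum_(i | P i) w i * z i ^+ 2.
Proof.
move=> hw hz.
set Q := \sum_(i | P i) w i * z i ^+ 2.
have inner : forall i, \sum_(j | P j) w i * w j * (z i - z j) ^+ 2 =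
    c0 * (w i * z i ^+ 2) + Q * w i.
  move=> i.
  rewrite (eq_bigr (fun j => (w i * z i ^+ 2) * w j + w i * (w j * z j ^+ 2)
                - (2 * w i * z i) * (w j * z j))); last by move=> j _; ring.
  rewrite sumrB big_split /= -!mulr_sumr hw hz /Q; ring.
rewrite (eq_bigr _ (fun i _ => inner i)) big_split /= -!mulr_sumr hw -/Q.
ring.
Qed.

End Alg.

Section Stat.
Variables (R : realType) (I : finType) (P : pred I) (b p : I -> R) (r mu : R).
Hypothesis r0 : 0 < r.
Hypothesis r1 : r <= 1.
Hypothesis bpos : forall i, P i -> 0 < b i.
Hypothesis ppos : forall i, P i -> 0 < p i.
Hypothesis psum : \sum_(i | P i) p i = 1.
Hypothesis mub : forall i, P i -> mu * b i < 1.
Hypothesis esum : \sum_(i | P i) r * p i / (1 - mu * b i) = 1.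

Definition eta i := r * p i / (1 - mu * b i).
Definition lam := \sum_(i | P i) b i * eta i.

Lemma eta_pos i : P i -> 0 < eta i.
Proof.
move=> Pi; rewrite /eta divr_gt0 ?mulr_gt0 ?ppos //.
by rewrite subr_gt0 mub.
Qed.

Lemma eta_sum : \sum_(i | P i) eta i = 1.
Proof. exact: esum. Qed.

Lemma eta_eq i : P i -> eta i * (1 - mu * b i) = r * p i.
Proof.
move=> Pi; rewrite /eta mulfVK //; have := mub Pi; rewrite subr_eq0.
by move=> h; apply/eqP => e; move: h; rewrite -e ltxx.
Qed.

Lemma lam_pos : 0 < lam.
Proof.
rewrite /lam; have : (0 < \sum_(i | P i) eta i) by rewrite eta_sum.
move=> h; have [i Pi|H0] := pickP P; last first.
  by move: h; rewrite big_pred0 ?ltxx.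
rewrite (bigD1 i) //=; apply: ltr_pwDl.
  by rewrite mulr_gt0 ?bpos ?eta_pos.
by apply: sumr_ge0 => j /andP[Pj _]; rewrite mulr_ge0 // ltW ?bpos ?eta_pos.
Qed.

Lemma mulam : mu * lam = 1 - r.
Proof.
have : \sum_(i | P i) eta i * (1 - mu * b i) = r.
  by rewrite (eq_bigr _ eta_eq) -mulr_sumr psum mulr1.
have -> : \sum_(i | P i) eta i * (1 - mu * b i) =
          \sum_(i | P i) eta i - mu * lam.
  rewrite /lam mulr_sumr -sumrB; apply: eq_bigr => i _; ring.
rewrite eta_sum; lra.
Qed.

Lemma eigen i : P i -> lam * eta i - (1 - r) * b i * eta i = r * p i * lam.
Proof.
move=> Pi; rewrite -(eta_eq Pi) -mulam; ring.
Qed.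


Variable y : R -> I -> R.
Definition U (t : R) := \sum_(j | P j) b j * y t j.
Definition Fi (t : R) i := (1 - r) * b i * y t i + r * U t * p i - y t i * U t.
Hypothesis yrc : forall i, P i -> y s i @[s --> 0^'+] --> y 0 i.
Hypothesis yd : forall i, P i -> forall t : R, 0 < t ->
  is_derive t 1 (fun s => y s i) (Fi t i).
Hypothesis y0pos : forall i, P i -> 0 <= y 0 i.
Hypothesis y0sum : \sum_(i | P i) y 0 i = 1.

Lemma lin_rc (c : I -> R) :
  (\sum_(j | P j) c j * y s j) @[s --> 0^'+] --> \sum_(j | P j) c j * y 0 j.
Proof. by apply: cvg_bigsum => j Pj; exact: cvgMl_tmp (yrc Pj). Qed.

Lemma lind (c : I -> R) (t : R) : 0 < t ->
  is_derive t 1 (fun s => \sum_(j | P j) c j * y s j) (\sum_(j | P j) c j * Fi t j).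
Proof.
move=> t0; apply: is_derive_bigsum => j Pj.
have h := is_deriveZ (c j) (yd Pj t0); exact: h.
Qed.

Lemma U_bound (T : R) : 0 < T -> exists M, forall t : R, 0 < t < T -> `|U t| <= M.
Proof.
move=> T0.
have hc : {within `[0, T], continuous U}.
  apply: within_cont0 => //; first exact: (@lin_rc b).
  by move=> t t0; case: (@lind b t t0).
have [M HM] := within_bounded (ltW T0) hc.
by exists M => t /andP[t0 tT]; apply: HM; rewrite !ltW.
Qed.

Lemma sumF (t : R) : \sum_(j | P j) Fi t j = U t * (1 - \sum_(j | P j) y t j).
Proof.
rewrite (eq_bigr (fun j => (1 - r) * (b j * y t j) + (r * U t) * p j - U t * y t j));
  last by move=> j _; rewrite /Fi; ring.
rewrite sumrB big_split /= -!mulr_sumr psum -/(U t); ring.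
Qed.

Lemma S_one (t : R) : 0 < t -> \sum_(j | P j) y t j = 1.
Proof.
move=> t0.
pose f := fun s => 1 - \sum_(j | P j) y s j.
have frc : f x @[x --> 0^'+] --> f 0.
  apply: cvgB; first exact: cvg_cst.
  by apply: cvg_bigsum => j Pj; exact: yrc.
have fd : forall z : R, 0 < z -> is_derive z 1 f ((- U z) * f z).
  move=> z z0.
  have h := is_deriveB (is_derive_cst (1 : R) z (1 : R))
     (@is_derive_bigsum _ _ (index_enum I) P (fun j x => y x j) (fun j => Fi z j) z
        (fun j Pj => yd Pj z0)).
  have e : (cst (1:R) - (fun x => \sum_(j | P j) y x j)) = f.
    by apply: funext => z'; rewrite /f.
  rewrite e in h.
  eapply is_derive_eq; first exact: h.
  by rewrite sumF /f; ring.
have [M HM] := U_bound t0.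
have HM' : forall s : R, 0 < s < t -> `|- U s| <= M.
  by move=> s hs; rewrite normrN; exact: HM.
have [h _] := gronwall t0 frc fd HM'.
have f00 : f 0 = 0 by rewrite /f y0sum subrr.
by move: (h f00); rewrite /f; lra.
Qed.

Definition v i := b i * eta i / p i.
Definition m (t : R) := \sum_(j | P j) v j * y t j.

Lemma dm (t : R) : \sum_(j | P j) v j * Fi t j = (lam - U t) * m t.
Proof.
have term : forall j, P j -> v j * Fi t j =
   lam * (v j * y t j) - r * lam * (b j * y t j) + r * U t * (b j * eta j)
   - U t * (v j * y t j).
  move=> j Pj; apply/eqP; rewrite -subr_eq0; apply/eqP.
  have pj := ppos Pj.
  have -> : v j * Fi t j - (lam * (v j * y t j) - r * lam * (b j * y t j) +
     r * U t * (b j * eta j) - U t * (v j * y t j)) =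
     (b j * y t j / p j) * ((1 - r) * b j * eta j - lam * eta j + r * p j * lam).
    by rewrite /v /Fi; field; rewrite gt_eqF.
  rewrite -(eigen Pj); set A := (1 - r) * b j * eta j; set B := lam * eta j.
  by rewrite (_ : A - B + (B - A) = 0) ?mulr0 //; ring.
rewrite (eq_bigr _ term) !sumrB !big_split /= -!mulr_sumr.
rewrite sumrN -mulr_sumr -/(m t) -/(U t) -/lam; ring.
Qed.

Lemma m_der (t : R) : 0 < t -> is_derive t 1 m ((lam - U t) * m t).
Proof.
move=> t0; rewrite -dm; exact: (@lind v t t0).
Qed.

Lemma v_pos i : P i -> 0 < v i.
Proof. by move=> Pi; apply: divr_gt0; [apply: mulr_gt0; [exact: bpos|exact: eta_pos]|exact: ppos]. Qed.

Lemma m0 : m 0 != 0.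
Proof.
apply/negP => /eqP h0.
have H := psumr_eq0P (fun j Pj => mulr_ge0 (ltW (v_pos Pj)) (y0pos Pj)) h0.
move: y0sum; rewrite big1 => [/eqP|j Pj]; first by rewrite eq_sym oner_eq0.
by have := H j Pj => /eqP; rewrite mulf_eq0 gt_eqF ?v_pos //= => /eqP.
Qed.

Lemma m_nz (t : R) : 0 < t -> m t != 0.
Proof.
move=> t0; have [M HM] := U_bound t0.
have HM' : forall s : R, 0 < s < t -> `|lam - U s| <= lam + M.
  move=> s hs; apply: le_trans (ler_normB _ _) _.
  rewrite ger0_norm ?lerD2l ?HM //; exact: ltW lam_pos.
have [_ h] := gronwall t0 (@lin_rc v) m_der HM'.
exact: h m0.
Qed.

Definition q (t : R) i := y t i / (eta i * m t).
Definition w i := v i * eta i.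
Definition c0 := \sum_(i | P i) w i.
Definition kk := c0^-1.
Definition sv i := b i * eta i.
Definition H (t : R) := \sum_(i | P i) w i * (q t i - kk) ^+ 2.
Definition dq (t : R) i := r * p i / eta i * (U t / m t - lam * q t i).

Lemma eta_neq0 i : P i -> eta i != 0.
Proof. by move=> Pi; rewrite gt_eqF ?eta_pos. Qed.

Lemma q_der i (t : R) : P i -> 0 < t -> is_derive t 1 (fun s => q s i) (dq t i).
Proof.
move=> Pi t0.
have hm := m_der t0.
have hem := is_deriveZ (eta i) hm.
have nz : eta i * m t != 0 by rewrite mulf_neq0 ?eta_neq0 ?m_nz.
have hinv := @is_deriveV R (fun s => eta i * m s) t _ 1 nz hem.
have hq := is_deriveM (yd Pi t0) hinv.
eapply is_derive_eq; first exact: hq.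
have ei := eta_neq0 Pi; have mt := m_nz t0.
have l0 : lam != 0 by rewrite gt_eqF ?lam_pos.
have rn0 : r != 0 by rewrite gt_eqF.
have pe : p i = eta i * (lam - (1 - r) * b i) / (r * lam).
  apply: (@mulIf _ (r * lam)); first by rewrite mulf_neq0.
  rewrite divfK ?mulf_neq0 //; have := eigen Pi; lra.
rewrite /GRing.scale /= /dq /Fi /q pe; field.
by rewrite ei mt rn0 l0.
Qed.

Lemma is_derive_funext (f g : R -> R) (x d : R) :
  (forall z, f z = g z) -> is_derive x 1 f d -> is_derive x 1 g d.
Proof. by move=> e; have -> : g = f by apply: funext => z; rewrite e. Qed.

Lemma exP : exists i, P i.
Proof.
have [i Pi|H0] := pickP P; first by exists i.
by move: psum; rewrite big_pred0 // => /eqP; rewrite eq_sym oner_eq0.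
Qed.

Lemma w_pos i : P i -> 0 < w i.
Proof. by move=> Pi; rewrite /w mulr_gt0 ?v_pos ?eta_pos. Qed.

Lemma c0_pos : 0 < c0.
Proof.
have [i Pi] := exP; rewrite /c0 (bigD1 i) //=; apply: ltr_pwDl; first exact: w_pos.
by apply: sumr_ge0 => j /andP[Pj _]; exact/ltW/w_pos.
Qed.

Lemma H_der (t : R) : 0 < t ->
  is_derive t 1 H (\sum_(i | P i) w i * (2 * (q t i - kk) * dq t i)).
Proof.
move=> t0; rewrite /H.
apply: (@is_derive_bigsum _ _ (index_enum I) P
   (fun i s => w i * (q s i - kk) ^+ 2)
   (fun i => w i * (2 * (q t i - kk) * dq t i)) t) => i Pi.
have h1 := is_deriveB (q_der Pi t0) (is_derive_cst kk t 1).
have h2 := is_deriveX 2 h1.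
have h3 := is_deriveZ (w i) h2.
eapply is_derive_funext; last first.
  eapply is_derive_eq; first exact: h3.
  have -> : (((fun s => q s i) - cst kk) t) = q t i - kk by [].
  rewrite /GRing.scale /=; ring.
by move=> z; rewrite !fctE.
Qed.

Lemma sumq (t : R) i : P i -> 0 < t ->
  \sum_(j | P j) sv j * (q t j - q t i) = U t / m t - lam * q t i.
Proof.
move=> Pi t0; have mt := m_nz t0.
rewrite (eq_bigr (fun j => (b j * y t j) * (m t)^-1 - sv j * q t i)); last first.
  by move=> j Pj; rewrite /sv /q; field; rewrite mt !eta_neq0.
by rewrite big_split /= sumrN -!mulr_suml.
Qed.

Lemma dH_eq (t : R) : 0 < t ->
  \sum_(i | P i) w i * (2 * (q t i - kk) * dq t i) =
  - (r * \sum_(i | P i) \sum_(j | P j) sv i * sv j * (q t i - q t j) ^+ 2).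
Proof.
move=> t0.
rewrite (eq_bigr (fun i => r * (sv i * (q t i - kk) *
    (\sum_(j | P j) sv j * (q t j - q t i)) * 2))); last first.
  move=> i Pi; rewrite sumq // /dq /w /v /sv; field.
  by rewrite m_nz // eta_neq0 // gt_eqF ?ppos.
by rewrite -big_distrr /= sym_id mulrN.
Qed.

Lemma wq_sum (t : R) : 0 < t -> \sum_(i | P i) w i * (q t i - kk) = 0.
Proof.
move=> t0; have mt := m_nz t0.
rewrite (eq_bigr (fun i => (v i * y t i) * (m t)^-1 - w i * kk)); last first.
  by move=> i Pi; rewrite /w /q; field; rewrite mt eta_neq0.
rewrite sumrB -!mulr_suml -/(m t) -/c0 mulfV // /kk mulfV ?subrr //.
by rewrite gt_eqF ?c0_pos.
Qed.

Lemma H_id (t : R) : 0 < t ->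
  2 * c0 * H t = \sum_(i | P i) \sum_(j | P j) w i * w j * (q t i - q t j) ^+ 2.
Proof.
move=> t0.
have := var_id (w := w) (z := fun i => q t i - kk) (erefl c0) (wq_sum t0).
move=> <-; apply: eq_bigr => i _; apply: eq_bigr => j _.
by congr (_ * _); congr (_ ^+ _); ring.
Qed.

Definition gg i := r / (1 - mu * b i).
Definition GG := \sum_(i | P i) gg i.
Definition rho := GG^-1.

Lemma gg_pos i : P i -> 0 < gg i.
Proof. by move=> Pi; rewrite /gg divr_gt0 // subr_gt0 mub. Qed.

Lemma rho_gg i : P i -> rho * gg i <= 1.
Proof.
move=> Pi.
have G1 : gg i <= GG.
  rewrite /GG (bigD1 i) //= lerDl.
  by apply: sumr_ge0 => j /andP[Pj _]; exact/ltW/gg_pos.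
have G0 : 0 < GG by apply: lt_le_trans G1; exact: gg_pos.
by rewrite /rho ler_pdivrMl // mulr1.
Qed.

Lemma rho_pos : 0 < rho.
Proof.
have [i Pi] := exP.
have G1 : gg i <= GG.
  rewrite /GG (bigD1 i) //= lerDl.
  by apply: sumr_ge0 => j /andP[Pj _]; exact/ltW/gg_pos.
by rewrite /rho invr_gt0; apply: lt_le_trans G1; exact: gg_pos.
Qed.

Lemma w_sv i : P i -> w i = sv i * gg i.
Proof.
move=> Pi; rewrite /w /v /sv /gg /eta; field.
rewrite (gt_eqF (ppos Pi)) andbT subr_eq0.
by apply/negP => /eqP e; move: (mub Pi); rewrite -e ltxx.
Qed.

Lemma sv_pos i : P i -> 0 < sv i.
Proof. by move=> Pi; rewrite /sv mulr_gt0 ?bpos ?eta_pos. Qed.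

Definition kap := r * rho ^+ 2 * (2 * c0).

Lemma dH_le (t : R) : 0 < t ->
  \sum_(i | P i) w i * (2 * (q t i - kk) * dq t i) <= - (kap * H t).
Proof.
move=> t0; rewrite dH_eq // lerN2 /kap -mulrA H_id //.
rewrite -mulrA ler_pM2l // big_distrr /= ler_sum // => i Pi.
rewrite big_distrr /= ler_sum // => j Pj.
rewrite mulrA ler_wpM2r ?sqr_ge0 // (w_sv Pi) (w_sv Pj).
have a := rho_gg Pi; have c := rho_gg Pj.
have a0 := gg_pos Pi; have c1 := gg_pos Pj; have r2 := rho_pos.
have s1 := sv_pos Pi; have s2 := sv_pos Pj.
have : (rho * gg i) * (rho * gg j) <= 1 by rewrite mulr_ile1 // ltW // mulr_gt0.
move=> h; have ss : 0 < sv i * sv j by rewrite mulr_gt0.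
have -> : rho ^+ 2 * (sv i * gg i * (sv j * gg j)) =
   (sv i * sv j) * ((rho * gg i) * (rho * gg j)) by ring.
by rewrite ger_pMr.
Qed.

Lemma H_ge0 (t : R) : 0 <= H t.
Proof. by apply: sumr_ge0 => i Pi; rewrite mulr_ge0 ?sqr_ge0 // ltW ?w_pos. Qed.

Lemma H_cvg : H t @[t --> +oo] --> 0.
Proof.
have k0 : 0 < kap by rewrite /kap !mulr_gt0 ?exprn_gt0 ?rho_pos ?c0_pos.
exact: (decay k0 H_der dH_le (fun t _ => H_ge0 t)).
Qed.

Lemma q_cvg i : P i -> q t i @[t --> +oo] --> kk.
Proof.
move=> Pi; have wi := w_pos Pi.
have bnd : forall t : R, 0 < t -> (q t i - kk) ^+ 2 <= H t / w i.
  move=> t t0; rewrite ler_pdivlMr // mulrC /H (bigD1 i) //= lerDl.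
  by apply: sumr_ge0 => j /andP[Pj _]; rewrite mulr_ge0 ?sqr_ge0 // ltW ?w_pos.
have hc : (H t / w i) @[t --> +oo] --> 0.
  have h := cvgMr_tmp (b := (w i)^-1) H_cvg; rewrite mul0r in h; exact: h.
exact: (sq_conv hc bnd).
Qed.

Theorem y_cvg i : P i -> y t i @[t --> +oo] --> eta i.
Proof.
move=> Pi.
have kk0 : kk != 0 by rewrite /kk invr_eq0 gt_eqF ?c0_pos.
have num : (eta i * q t i) @[t --> +oo] --> eta i * kk.
  exact: cvgMl_tmp (q_cvg Pi).
have den : (\sum_(j | P j) eta j * q t j) @[t --> +oo] --> kk.
  have h := @cvg_bigsum _ _ _ _ _ (index_enum I) P (fun j t => eta j * q t j)
     (fun j => eta j * kk) (fun j Pj => cvgMl_tmp (a := eta j) (q_cvg Pj)).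
  rewrite -mulr_suml eta_sum mul1r in h; exact: h.
have hr : ((fun t => eta i * q t i) \*
     unstable.inv_fun (fun t => \sum_(j | P j) eta j * q t j)) x @[x --> +oo] -->
    eta i.
  have h := cvgM num (cvgV kk0 den); rewrite mulfK // in h; exact: h.
apply: (cvg_trans _ hr); apply: near_eq_cvg; near=> t.
have t0 : 0 < t by near: t; apply: nbhs_pinfty_gt; rewrite num_real.
have mt := m_nz t0.
have sq : \sum_(j | P j) eta j * q t j = (m t)^-1.
  rewrite (eq_bigr (fun j => y t j * (m t)^-1)); last first.
    by move=> j Pj; rewrite /q; field; rewrite mt eta_neq0.
  by rewrite -mulr_suml S_one // mul1r.
rewrite /= sq invrK /q; field; by rewrite mt eta_neq0.
Unshelve. all: by end_near.
Qed.

End Stat.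




Section Gen.
Variable R : realType.

Lemma prod_sum_dep (I : finType) (J : I -> finType) (F : forall i, J i -> R) :
  \sum_(f : {dffun forall i, J i}) \prod_i F i (f i) = \prod_i \sum_(j : J i) F i j.
Proof.
pose T := {i : I & J i}.
pose G (t : T) := F (tag t) (tagged t).
have E1 : forall i, \sum_(j : J i) F i j = \sum_(t : T | tag t == i) G t.
  move=> i.
  have inj : {in [set: J i]%SET &, injective (fun j : J i => Tagged J j : T)}.
    by move=> j1 j2 _ _; exact: eq_from_Tagged.
  rewrite (eq_bigl (mem ((fun j : J i => Tagged J j : T) @: [set: J i]%SET))); last first.
    move=> t; rewrite -[mem _ t]/(t \in _); apply/eqP/imsetP => [e|[j _ ->] //].
    by exists (etagged e); rewrite ?inE // etaggedK.
  by rewrite big_imset //=; apply: eq_bigl => j; rewrite inE.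
rewrite (eq_bigr _ (fun i _ => E1 i)) bigA_distr_big_dep.
pose h (f : {dffun forall i, J i}) : {ffun I -> T} := [ffun i => Tagged J (f i)].
have inj : {in [set: {dffun forall i, J i}]%SET &, injective h}.
  move=> f1 f2 _ _ e; apply/ffunP => i.
  have := congr1 (fun g : {ffun I -> T} => g i) e; rewrite /h !ffunE.
  exact: eq_from_Tagged.
rewrite (eq_bigl (mem (h @: [set: {dffun forall i, J i}]%SET))); last first.
  move=> g /=; apply/familyP/imsetP => [H|[f _ ->] i].
    have H' : forall i, tag (g i) = i by move=> i; have := H i; rewrite /in_mem /= => /eqP.
    exists (finfun (fun i => etagged (H' i))); first by rewrite inE.
    by apply/ffunP => i; rewrite /h !ffunE etaggedK.
  by rewrite /h ffunE /in_mem /=.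
rewrite big_imset //=; apply: eq_big => [f|f _]; first by rewrite inE.
by apply: eq_bigr => i _; rewrite /h ffunE.
Qed.

Lemma sum_pos_ex (I : finType) (P : pred I) (F : I -> R) :
  0 < \sum_(i | P i) F i -> exists2 i, P i & F i != 0.
Proof.
move=> h; case: (pickP (fun i => P i && (F i != 0))) => [i /andP[Pi Fi]|H0].
  by exists i.
move: h; rewrite big1 ?ltxx // => i Pi; have := H0 i; rewrite Pi /=.
by move/negbFE/eqP.
Qed.

Lemma sum_pos (I : finType) (P : pred I) (F : I -> R) i0 :
  (forall i, P i -> 0 <= F i) -> P i0 -> 0 < F i0 -> 0 < \sum_(i | P i) F i.
Proof.
move=> H Pi0 Fi0; rewrite (bigD1 i0) //=; apply: ltr_pwDl => //.
by apply: sumr_ge0 => j /andP[Pj _]; exact: H.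
Qed.

Lemma term_le_sum (I : finType) (P : pred I) (F : I -> R) i0 :
  (forall i, P i -> 0 <= F i) -> P i0 -> F i0 <= \sum_(i | P i) F i.
Proof.
move=> H Pi0; rewrite (bigD1 i0) //= lerDl.
by apply: sumr_ge0 => j /andP[Pj _]; exact: H.
Qed.

End Gen.


Section J.
Variables (n : nat) (A : 'I_n -> finType) (d : 'I_n).

Lemma join_d (ad : A d) (am : Rest A d) : join ad am d = ad.
Proof.
rewrite /join ffunE; case: (d =P d) => [e|//].
by rewrite (eq_irrelevance e erefl).
Qed.

Lemma join_ne (ad : A d) (am : Rest A d) (d' : 'I_n) (h : d' != d) :
  join ad am d' = am (exist _ d' h).
Proof.
rewrite /join ffunE; case: (d =P d') => [e|ne].
  by exfalso; move: h; rewrite -e eqxx.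
by rewrite (eq_irrelevance (neq_of ne) h).
Qed.

Lemma restr_join (ad : A d) (am : Rest A d) : restr d (join ad am) = am.
Proof.
apply/ffunP => -[d' h]; rewrite ffunE /=; exact: join_ne.
Qed.

Lemma restr_app (a : Prof A) (d' : Other d) : restr d a d' = a (val d').
Proof. by rewrite ffunE. Qed.

End J.

Section Exist.
Variables (R : realType) (I : finType) (P : pred I) (b p : I -> R) (r : R).
Hypothesis r0 : 0 < r.
Hypothesis r1 : r <= 1.
Hypothesis bpos : forall i, P i -> 0 < b i.
Hypothesis ppos : forall i, P i -> 0 < p i.
Hypothesis psum : \sum_(i | P i) p i = 1.

Lemma exists_mu : exists mu : R, (forall i, P i -> mu * b i < 1) /\
  \sum_(i | P i) r * p i / (1 - mu * b i) = 1.
Proof.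
have [i0 Pi0 _] : exists2 i, P i & p i != 0 by apply: sum_pos_ex; rewrite psum.
case: (arg_maxP b Pi0) => im Pim Hmax.
set B := b im; set ps := p im.
have B0 : 0 < B by exact: bpos.
have ps0 : 0 < ps by exact: ppos.
have ps1 : ps <= 1.
  by rewrite -psum; apply: term_le_sum => // i Pi; exact/ltW/ppos.
pose mu1 := (1 - r * ps) / B.
have rps : r * ps <= 1 by rewrite -[1]mul1r ler_pM // ltW.
have mu10 : 0 <= mu1 by rewrite divr_ge0 // ?subr_ge0 // ltW.
have mu1B : mu1 * B = 1 - r * ps by rewrite /mu1 divfK // gt_eqF.
have key : forall m, 0 <= m <= mu1 -> forall i, P i -> m * b i <= 1 - r * ps.
  move=> m /andP[m0 m1] i Pi; rewrite -mu1B.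
  have bi := Hmax i Pi; have bi0 := bpos Pi.
  apply: le_trans (_ : mu1 * b i <= _); first by rewrite ler_wpM2r // ltW.
  by rewrite ler_wpM2l.
have rps0 : 0 < r * ps by rewrite mulr_gt0.
pose g := fun m : R => \sum_(i | P i) r * p i / (1 - m * b i).
have gc : {within `[0, mu1], continuous g}.
  apply: continuous_in_subspaceT => m.
  rewrite inE /= in_itv /= => hm.
  apply: (@cvg_bigsum R R (nbhs m) _ I (index_enum I) P
            (fun i z => r * p i / (1 - z * b i)) (fun i => r * p i / (1 - m * b i))) => i Pi.
  have nz : 1 - m * b i != 0.
    by rewrite gt_eqF // subr_gt0; apply: le_lt_trans (key m hm i Pi) _; lra.
  have h1 : (1 - z * b i) @[z --> (m : R)] --> 1 - m * b i.
    apply: cvgB; first exact: cvg_cst.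
    by apply: cvgMr_tmp; exact: cvg_id.
  have h2 : (1 - z * b i)^-1 @[z --> (m : R)] --> (1 - m * b i)^-1.
    exact: (cvgV nz h1).
  have h3 : (r * p i * (1 - z * b i)^-1) @[z --> (m : R)] --> r * p i * (1 - m * b i)^-1.
    exact: (cvgMl_tmp (a := r * p i) h2).
  exact: h3.
have g0 : g 0 = r.
  rewrite /g (eq_bigr (fun i => r * p i)); last by move=> i _; rewrite mul0r subr0 divr1.
  by rewrite -mulr_sumr psum mulr1.
have g1 : 1 <= g mu1.
  have t1 : r * ps / (1 - mu1 * B) = 1.
    have -> : 1 - mu1 * B = r * ps by rewrite mu1B; ring.
    by rewrite divff // gt_eqF.
  rewrite -t1 /g.
  apply: (@term_le_sum R I P (fun i => r * p i / (1 - mu1 * b i)) im) => // i Pi.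
  have := key mu1 _ i Pi; rewrite mu10 lexx => /(_ isT) h.
  by rewrite divr_ge0 // ?mulr_ge0 ?ltW ?ppos //; lra.
have [mu muin gmu] : exists2 mu, mu \in `[0, mu1] & g mu = 1.
  apply: IVT => //; apply/andP; split.
    by rewrite ge_min g0 r1.
  by rewrite le_max g1 orbT.
move: muin; rewrite in_itv /= => /andP[mu0 mu1le].
exists mu; split => //.
move=> i Pi; apply: le_lt_trans (key mu _ i Pi) _; first by rewrite mu0 mu1le.
lra.
Qed.
End Exist.


Section Main.
Variables (n : nat) (A : 'I_n -> finType) (R : realType)
  (u : Prof A -> Prof A -> R) (r : R) (x : Prof A -> R) (d : 'I_n) (ad : A d).
Hypothesis upos : forall a a', 0 < u a a'.
Hypothesis r0 : 0 < r.
Hypothesis r1 : r <= 1.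
Hypothesis xs : simplex x.
Hypothesis xst : recomb_stationary u r x.

Lemma x_ge0 a : 0 <= x a. Proof. by case: xs. Qed.
Lemma x_sum : \sum_a x a = 1. Proof. by case: xs. Qed.

Lemma ex_xpos : exists a, 0 < x a.
Proof.
have [a _ h] : exists2 a, true & x a != 0 by apply: sum_pos_ex; rewrite x_sum.
by exists a; rewrite lt0r h x_ge0.
Qed.

Lemma ux_pos a : 0 < ux u x a.
Proof.
have [a' ha'] := ex_xpos.
apply: (@sum_pos R _ predT _ a') => // [i _|]; last by rewrite mulr_gt0.
by rewrite mulr_ge0 ?x_ge0 // ltW.
Qed.

Lemma ubar_pos : 0 < ubar u x.
Proof.
have [a' ha'] := ex_xpos.
apply: (@sum_pos R _ predT _ a') => // [i _|]; last by rewrite mulr_gt0 ?ux_pos.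
by rewrite mulr_ge0 ?x_ge0 // ltW ?ux_pos.
Qed.

Lemma marg_ge0 d' (c : A d') : 0 <= marg x c.
Proof. by apply: sumr_ge0 => a _; exact: x_ge0. Qed.

Lemma marg_sum (d' : 'I_n) : \sum_(c : A d') marg x c = 1.
Proof.
rewrite -x_sum (partition_big (fun a : Prof A => a d') xpredT) //=.
Qed.

Lemma margu_pos d' (c : A d') : 0 < marg x c -> 0 < margu u x c.
Proof.
move=> h; have [a ha xa] := sum_pos_ex h.
apply: (@sum_pos R _ _ _ a) => // [i _|].
  by rewrite mulr_ge0 ?x_ge0 // ltW ?ux_pos.
by rewrite mulr_gt0 ?ux_pos // lt0r xa x_ge0.
Qed.

Lemma pm_sum_all : \sum_(am : Rest A d) prodmarg x am = 1.
Proof.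
rewrite /prodmarg (prod_sum_dep (fun d' : Other d => fun c : A (val d') => marg x c)).
by apply: big1 => d' _; exact: marg_sum.
Qed.

Lemma pm_ge0 (am : Rest A d) : 0 <= prodmarg x am.
Proof. by apply: prodr_ge0 => d' _; exact: marg_ge0. Qed.

Lemma supp_pm (am : Rest A d) : suppm x am -> 0 < prodmarg x am.
Proof.
rewrite /suppm /margm => h; have [a /eqP ha xa] := sum_pos_ex h.
have xa0 : 0 < x a by rewrite lt0r xa x_ge0.
apply: prodr_gt0 => d' _; apply: lt_le_trans xa0 _.
rewrite /marg; apply: (@term_le_sum R _ _ _ a) => [i _|]; first exact: x_ge0.
by rewrite -ha restr_app.
Qed.

Lemma pm_supp (am : Rest A d) : 0 < prodmarg x am -> suppm x am.
Proof.
move=> hp.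
have mpos : forall d' : Other d, 0 < marg x (am d').
  move=> d'; rewrite lt0r marg_ge0 andbT; apply/eqP => H0; move: hp.
  by rewrite /prodmarg (bigD1 d') //= H0 mul0r ltxx.
have [c _ hc] : exists2 c : A d, true & marg x c != 0.
  by apply: sum_pos_ex; rewrite marg_sum.
have c0 : 0 < marg x c by rewrite lt0r hc marg_ge0.
pose a := join ad am; pose a' := join c am.
have Q0 : 0 < \prod_(d'' : 'I_n) (margu u x (a' d'') / ubar u x).
  apply: prodr_gt0 => d'' _; apply: divr_gt0; last exact: ubar_pos.
  apply: margu_pos; case: (eqVneq d'' d) => [e|ne].
    by subst d''; rewrite /a' join_d.
  by rewrite /a' (join_ne c am ne); exact: (mpos (exist _ d'' ne)).
have xa : 0 < x a'.
  rewrite lt0r x_ge0 andbT; apply/eqP => X0; move: (xst a').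
  rewrite /recomb_field X0 mul0r mul0r mulr0 add0r subr0 => /eqP.
  by rewrite mulf_eq0 !gt_eqF.
rewrite /suppm /margm; apply: lt_le_trans xa _.
apply: (@term_le_sum R _ _ _ a') => [i _|]; first exact: x_ge0.
by rewrite /a' restr_join.
Qed.

Lemma psum_supp : \sum_(am : Rest A d | suppm x am) prodmarg x am = 1.
Proof.
rewrite -pm_sum_all (bigID (@suppm _ _ _ x d) predT) /=.
rewrite [X in _ = _ + X]big1 ?addr0 // => am /negP ns.
apply/eqP; rewrite eq_le pm_ge0 andbT leNgt; apply/negP => h; apply: ns.
exact: pm_supp.
Qed.

Definition PP : pred (Rest A d) := fun am => suppm x am.
Definition bb (am : Rest A d) := uhat u x (join ad am).
Definition pp (am : Rest A d) := prodmarg x am.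

Lemma bb_pos am : 0 < bb am.
Proof. by rewrite /bb /uhat divr_gt0 ?ux_pos ?ubar_pos. Qed.

Lemma bb_pos' am : PP am -> 0 < bb am.
Proof. by move=> _; exact: bb_pos. Qed.

Lemma pp_pos am : PP am -> 0 < pp am.
Proof. exact: supp_pm. Qed.

Lemma psum' : \sum_(i | PP i) pp i = 1.
Proof. exact: psum_supp. Qed.

Lemma part1 (y : Rest A d -> R) : psimplex x y ->
  (partner_stationary u r x ad y <-> stable_partner u r x ad y).
Proof.
move=> hy; have [ypos ysum] := hy.
set U := uhat_cond u x ad y.
set D := \sum_(am' | suppm x am') y am' * ux u x (join ad am').
have ub := ubar_pos.
have UD : U = D / ubar u x.
  rewrite /U /uhat_cond /D mulr_suml; apply: eq_bigr => am _; rewrite /uhat; ring.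
have [am0 Pam0 yam0] : exists2 am, suppm x am & y am != 0.
  by apply: sum_pos_ex; rewrite ysum.
have U0 : 0 < U.
  apply: (@sum_pos R _ _ _ am0) => // [i Pi|].
    by rewrite mulr_ge0 ?ypos // ltW // -/(bb i) bb_pos.
  by rewrite mulr_gt0 -?/(bb am0) ?bb_pos // lt0r yam0 ypos.
have D0 : D / ubar u x != 0 by rewrite -UD gt_eqF.
have Dn0 : D != 0 by move: D0; rewrite mulf_eq0 negb_or => /andP[].
have key : forall am, partner_field u r x ad y am =
   - (y am - ((1 - r) * (y am * ux u x (join ad am) / D) + r * prodmarg x am)) *
     (D / ubar u x).
  move=> am; rewrite /partner_field -/U UD /uhat; field.
  by rewrite Dn0 gt_eqF.
split.
  move=> st; split => // am Pam; have := st am Pam; rewrite key => /eqP.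
  by rewrite mulf_eq0 (negbTE D0) orbF oppr_eq0 subr_eq0 => /eqP.
move=> [_ st] am Pam; rewrite key; apply/eqP.
by rewrite mulf_eq0 oppr_eq0 subr_eq0; apply/orP; left; apply/eqP; exact: st.
Qed.

Lemma main_part :
  (forall y : Rest A d -> R, psimplex x y ->
     (partner_stationary u r x ad y <-> stable_partner u r x ad y)) /\
  exists eta : Rest A d -> R,
    stable_partner u r x ad eta /\
    (forall eta', stable_partner u r x ad eta' ->
       forall am, suppm x am -> eta' am = eta am) /\
    (forall y : R -> Rest A d -> R,
       partner_solution u r x ad y -> psimplex x (y 0) ->
       forall am, suppm x am -> y t am @[t --> +oo] --> eta am).
Proof.
split; first exact: part1.
have [mu [mub esum]] := exists_mu r0 r1 bb_pos' pp_pos psum'.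
pose et := eta bb pp r mu.
have conv : forall y : R -> Rest A d -> R,
       partner_solution u r x ad y -> psimplex x (y 0) ->
       forall am, suppm x am -> y t am @[t --> +oo] --> et am.
  move=> y sol [y0pos y0sum] am Pam.
  apply: (@y_cvg R _ PP bb pp r mu r0 bb_pos' pp_pos psum' mub esum y _ _ y0pos y0sum am Pam).
    by move=> i Pi; case: (sol i Pi).
  by move=> i Pi t t0; case: (sol i Pi) => _ h; exact: h t t0.
have est : stable_partner u r x ad et.
  have ps : psimplex x et.
    split; last exact: (eta_sum esum).
    by move=> am Pam; apply: ltW; exact: (eta_pos r0 pp_pos mub Pam).
  apply/(part1 ps) => am Pam.
  have -> : partner_field u r x ad et am =
     (1 - r) * bb am * et am + r * pp am * lam PP bb pp r mu - et am * lam PP bb pp r mu.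
    rewrite /partner_field (_ : uhat_cond u x ad et = lam PP bb pp r mu) //.
    change (uhat u x (join ad am)) with (bb am); change (prodmarg x am) with (pp am); ring.
  rewrite /et -(eigen psum' mub esum Pam); ring.
exists et; split => //; split => // eta' st' am Pam.
have ps' : psimplex x eta' by case: st'.
have stat := (proj2 (part1 ps')) st'.
have sol : partner_solution u r x ad (fun _ : R => eta').
  move=> i Pi; split; first exact: cvg_cst.
  move=> t t0; eapply is_derive_eq; first exact: is_derive_cst.
  by rewrite (stat i Pi).
have H := conv _ sol ps' am Pam.
by rewrite -(norm_cvg_lim H) norm_lim_cst.
Qed.

End Main.


Unset Implicit Arguments.

Theorem mainTheorem13 (n : nat) (A : 'I_n -> finType) (R : realType)
  (u : Prof A -> Prof A -> R) (r : R) (x : Prof A -> R) (d : 'I_n) (ad : A d) :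
  (2 <= n)%N ->
  (forall a a', 0 < u a a') ->
  0 < r -> r <= 1 ->
  simplex x -> recomb_stationary u r x ->
  marg x ad = 0 ->
  (forall y : Rest A d -> R, psimplex x y ->
     (partner_stationary u r x ad y <-> stable_partner u r x ad y)) /\
  exists eta : Rest A d -> R,
    stable_partner u r x ad eta /\
    (forall eta', stable_partner u r x ad eta' ->
       forall am, suppm x am -> eta' am = eta am) /\
    (forall y : R -> Rest A d -> R,
       partner_solution u r x ad y -> psimplex x (y 0) ->
       forall am, suppm x am -> y t am @[t --> +oo] --> eta am).
Proof.
move=> _ upos r0 r1 xs xst _.
exact: (@main_part n A R u r x d ad upos r0 r1 xs xst).
Qed.
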